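(* Let $n>1$ be an integer and $\lambda>1$. Let $G=BS(1,n)=\langle a,b\mid ba=a^nb\rangle$ and let $\Phi:G\times\mathbb R^2\to\mathbb R^2$ be the linear action determined by $f_a(x)=Ax$, $f_b(x)=Bx$, where $A=\begin{pmatrix}1&0\\1&1\end{pmatrix}$ and $B=\begin{pmatrix}\lambda&0\\0&n\lambda\end{pmatrix}$ (this is well defined since $BA=A^nB$), and $\mathbb R^2$ carries the Euclidean metric. Then: (i) if $\lambda\in(1,n]$, the action $\Phi$ does not have the shadowing property; (ii) if $\lambda>n$, the action $\Phi$ has the shadowing property.
   Context: An action of a group $G$ on a metric space $(\Omega,\mathrm{dist})$ is a map $\Phi:G\times\Omega\to\Omega$ such that each $f_g=\Phi(g,\cdot)$ is a homeomorphism, $\Phi(e,x)=x$, and $\Phi(g_1g_2,x)=\Phi(g_1,\Phi(g_2,x))$. Fix a finite symmetric generating set $S$ of $G$ (e.g. $S=\{a,b,a^{-1},b^{-1}\}$; the property below does not depend on this choice). For $d>0$, a family $\{y_g\}_{g\in G}\subset\Omega$ is a $d$-pseudotrajectory if $\mathrm{dist}(y_{sg},f_s(y_g))<d$ for all $s\in S$, $g\in G$. The action has the shadowing property if for every $\varepsilon>0$ there is $d>0$ such that for every $d$-pseudotrajectory $\{y_g\}_{g\in G}$ there is $x_e\in\Omega$ with $\mathrm{dist}(y_g,f_g(x_e))<\varepsilon$ for all $g\in G$. *)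

(* Defs.v *)
From Stdlib Require Import Reals.
Open Scope R_scope.

Record Group := {
  carrier :> Type;
  gmul : carrier -> carrier -> carrier;
  ginv : carrier -> carrier;
  gone : carrier;
  gmul_assoc : forall x y z, gmul x (gmul y z) = gmul (gmul x y) z;
  gmul_1l : forall x, gmul gone x = x;
  gmul_1r : forall x, gmul x gone = x;
  gmul_Vl : forall x, gmul (ginv x) x = gone;
  gmul_Vr : forall x, gmul x (ginv x) = gone
}.

Arguments gmul {_} _ _.
Arguments ginv {_} _.
Arguments gone {_}.

Fixpoint gpow {G : Group} (x : G) (k : nat) : G :=
  match k with O => gone | S k' => gmul x (gpow x k') end.

Definition is_hom {G H : Group} (f : G -> H) : Prop :=
  forall x y, f (gmul x y) = gmul (f x) (f y).

Inductive generated {G : Group} (a b : G) : G -> Prop :=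
| gen_one : generated a b gone
| gen_step : forall s g, (s = a \/ s = b \/ s = ginv a \/ s = ginv b) ->
    generated a b g -> generated a b (gmul s g).

(** (G, a, b) is a presentation of BS(1,n) = < a, b | b a = a^n b >:
    G is generated by a, b, the relation holds, and G has the universal
    property of the presented group. *)
Definition is_BS1n (G : Group) (n : nat) (a b : G) : Prop :=
  (forall g : G, generated a b g) /\
  gmul b a = gmul (gpow a n) b /\
  (forall (H : Group) (h1 h2 : H), gmul h2 h1 = gmul (gpow h1 n) h2 ->
     exists f : G -> H, is_hom f /\ f a = h1 /\ f b = h2).

Definition dist2 (x y : R * R) : R :=
  sqrt ((fst x - fst y) ^ 2 + (snd x - snd y) ^ 2).

Definition continuous2 (f : R * R -> R * R) : Prop :=
  forall x eps, 0 < eps -> exists del, 0 < del /\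
    forall y, dist2 x y < del -> dist2 (f x) (f y) < eps.

(** An action of G on R^2 by homeomorphisms (continuity of each f_g together
    with the action axioms makes f_g a homeomorphism, with inverse f_{g^-1}). *)
Definition is_action (G : Group) (Phi : G -> R * R -> R * R) : Prop :=
  (forall g, continuous2 (Phi g)) /\
  (forall x, Phi gone x = x) /\
  (forall g1 g2 x, Phi (gmul g1 g2) x = Phi g1 (Phi g2 x)).

Definition in_S {G : Group} (a b s : G) : Prop :=
  s = a \/ s = b \/ s = ginv a \/ s = ginv b.

Definition pseudotrajectory {G : Group} (a b : G) (Phi : G -> R * R -> R * R)
  (d : R) (y : G -> R * R) : Prop :=
  forall s g, in_S a b s -> dist2 (y (gmul s g)) (Phi s (y g)) < d.

Definition shadowing {G : Group} (a b : G) (Phi : G -> R * R -> R * R) : Prop :=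
  forall eps, 0 < eps -> exists d, 0 < d /\
    forall y : G -> R * R, pseudotrajectory a b Phi d y ->
      exists x, forall g, dist2 (y g) (Phi g x) < eps.

Definition matA (x : R * R) : R * R := (fst x, fst x + snd x).
Definition matB (n : nat) (lam : R) (x : R * R) : R * R :=
  (lam * fst x, INR n * lam * snd x).

(* Main.v *)
Require Import Defs.
From Stdlib Require Import Reals Lra Lia.
Open Scope R_scope.

Lemma dist2_fst x y d : dist2 x y < d -> Rabs (fst x - fst y) < d.
Proof. unfold dist2. intros H. eapply Rle_lt_trans; [|exact H].
  rewrite <- sqrt_Rsqr_abs. apply sqrt_le_1_alt. pose proof (Rle_0_sqr (snd x - snd y)); pose proof (Rle_0_sqr (fst x - fst y)); unfold Rsqr in *; simpl; nra. Qed.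

Lemma dist2_snd x y d : dist2 x y < d -> Rabs (snd x - snd y) < d.
Proof. unfold dist2. intros H. eapply Rle_lt_trans; [|exact H].
  rewrite <- sqrt_Rsqr_abs. apply sqrt_le_1_alt. pose proof (Rle_0_sqr (snd x - snd y)); pose proof (Rle_0_sqr (fst x - fst y)); unfold Rsqr in *; simpl; nra. Qed.

Lemma dist2_lt x y A B d : Rabs (fst x - fst y) <= A -> Rabs (snd x - snd y) <= B ->
  A*A + B*B < d*d -> 0 < d -> dist2 x y < d.
Proof. intros H1 H2 H3 H4. unfold dist2. rewrite <- (sqrt_pow2 d) by lra.
  apply sqrt_lt_1_alt. rewrite <- (pow2_abs (fst x - fst y)), <- (pow2_abs (snd x - snd y)).
  pose proof (Rabs_pos (fst x - fst y)). pose proof (Rabs_pos (snd x - snd y)).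
  split; nra. Qed.


Lemma idem_one (G : Group) (x : G) : gmul x x = x -> x = gone.
Proof. intros H. rewrite <- (gmul_Vl G x). rewrite <- H at 3.
  rewrite gmul_assoc, gmul_Vl, gmul_1l. reflexivity. Qed.

Lemma inv_unique (G : Group) (x y : G) : gmul y x = gone -> y = ginv x.
Proof. intros H. rewrite <- (gmul_1r G y), <- (gmul_Vr G x), gmul_assoc, H, gmul_1l.
  reflexivity. Qed.

Lemma gpow_add (G : Group) (x : G) p q : gpow x (p + q) = gmul (gpow x p) (gpow x q).
Proof. induction p; simpl. now rewrite gmul_1l. rewrite IHp, gmul_assoc. reflexivity. Qed.

Lemma gpow_comm (G : Group) (x : G) k : gmul (gpow x k) x = gmul x (gpow x k).
Proof. induction k; simpl. now rewrite gmul_1l, gmul_1r.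
  rewrite <- gmul_assoc, IHk. reflexivity. Qed.

Lemma bs_rel1 (G : Group) (n : nat) (a b : G) : gmul b a = gmul (gpow a n) b ->
  forall m, gmul b (gpow a m) = gmul (gpow a (n*m)) b.
Proof. intros H m; induction m; simpl.
  - rewrite Nat.mul_0_r; simpl. now rewrite gmul_1l, gmul_1r.
  - rewrite gmul_assoc, H, <- gmul_assoc, IHm, gmul_assoc, <- gpow_add.
    now replace (n + n*m)%nat with (n * S m)%nat by lia.
Qed.

Lemma bs_rel2 (G : Group) (n : nat) (a b : G) : gmul b a = gmul (gpow a n) b ->
  forall k, gmul (gpow b k) a = gmul (gpow a (n^k)) (gpow b k).
Proof. intros H k; induction k; simpl.
  - rewrite gmul_1l, gmul_1r. simpl. rewrite gmul_1r. reflexivity.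
  - rewrite <- gmul_assoc, IHk, gmul_assoc, (bs_rel1 G n a b H), <- gmul_assoc. reflexivity.
Qed.


Lemma abs_le_e x e : Rabs x <= e -> -e <= x <= e.
Proof. unfold Rabs; destruct (Rcase_abs x); lra. Qed.
Lemma abs_lt_e x e : Rabs x < e -> -e < x < e.
Proof. unfold Rabs; destruct (Rcase_abs x); lra. Qed.

Lemma tail_bound (u : nat -> R) C r : 0 <= C -> 0 <= r < 1 ->
  (forall k, Rabs (u (S k) - u k) <= C * r^k) ->
  forall k j, Rabs (u (k+j)%nat - u k) <= C * r^k * (1 - r^j) / (1 - r).
Proof. intros HC Hr Hu k j. induction j.
  - rewrite Nat.add_0_r. unfold Rminus at 1. rewrite Rplus_opp_r, Rabs_R0. simpl.
    replace (C * r ^ k * (1 - 1) / (1 - r)) with 0 by (field; lra). lra.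
  - rewrite Nat.add_succ_r.
    replace (u (S (k + j)) - u k) with ((u (S (k+j)) - u (k+j)%nat) + (u (k+j)%nat - u k)) by ring.
    eapply Rle_trans; [apply Rabs_triang|].
    pose proof (Hu (k+j)%nat). rewrite pow_add in H.
    replace (C * r ^ k * (1 - r ^ S j) / (1 - r)) with
      (C * (r ^ k * r ^ j) + C * r ^ k * (1 - r ^ j) / (1 - r)) by (simpl; field; lra).
    lra.
Qed.

Lemma pow_nonneg r k : 0 <= r -> 0 <= r ^ k.
Proof. intros; apply pow_le; auto. Qed.

Lemma conv_seq (u : nat -> R) C r : 0 <= C -> 0 <= r < 1 ->
  (forall k, Rabs (u (S k) - u k) <= C * r^k) ->
  {l | forall k, Rabs (l - u k) <= C * r^k / (1 - r)}.
Proof. intros HC Hr Hu.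
  assert (Hm : forall k m, (m >= k)%nat -> Rabs (u m - u k) <= C * r^k / (1 - r)).
  { intros k m Hkm. replace m with (k + (m - k))%nat by lia.
    eapply Rle_trans; [apply (tail_bound u C r HC Hr Hu)|].
    pose proof (pow_nonneg r k (proj1 Hr)). pose proof (pow_nonneg r (m-k) (proj1 Hr)).
    unfold Rdiv. apply (Rmult_le_compat_r (/ (1 - r))). left; apply Rinv_0_lt_compat; lra.
    assert (0 <= C * r^k) by (apply Rmult_le_pos; auto). nra. }
  destruct (R_complete u) as [l Hl].
  { intros eps Heps.
    destruct (pow_lt_1_zero r ltac:(rewrite Rabs_right; lra) (eps * (1 - r) / (2 * (C + 1))))
      as [N HN].
    { apply Rdiv_lt_0_compat. nra. lra. }
    exists N. intros p q Hp Hq. unfold Rdist.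
    replace (u p - u q) with ((u p - u N) - (u q - u N)) by ring.
    eapply Rle_lt_trans; [apply Rabs_triang|]. rewrite Rabs_Ropp.
    pose proof (Hm N p Hp). pose proof (Hm N q Hq).
    pose proof (HN N (le_n N)). rewrite Rabs_right in H1 by (apply Rle_ge, pow_nonneg; lra).
    pose proof (pow_nonneg r N (proj1 Hr)).
    assert (C * r ^ N / (1 - r) < eps / 2).
    { apply (Rmult_lt_reg_r (1 - r)). lra. unfold Rdiv.
      rewrite Rmult_assoc, Rinv_l by lra.
      apply (Rmult_lt_compat_r (C + 1)) in H1; [|lra].
      replace (eps * (1 - r) / (2 * (C + 1)) * (C + 1)) with (eps * (1 - r) / 2) in H1 by (field; lra).
      nra. }
    lra. }
  exists l. intros k.
  destruct (Rle_or_lt (Rabs (l - u k)) (C * r ^ k / (1 - r))) as [|Hc]; auto.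
  exfalso. destruct (Hl (Rabs (l - u k) - C * r ^ k / (1 - r))) as [N HN]; [lra|].
  pose proof (HN (Nat.max N k) ltac:(lia)). pose proof (Hm k (Nat.max N k) ltac:(lia)).
  unfold Rdist in H.
  assert (Rabs (l - u k) <= Rabs (u (Nat.max N k) - l) + Rabs (u (Nat.max N k) - u k)).
  { replace (l - u k) with (- (u (Nat.max N k) - l) + (u (Nat.max N k) - u k)) by ring.
    eapply Rle_trans; [apply Rabs_triang|]. rewrite Rabs_Ropp. lra. }
  lra.
Qed.

Lemma zero_lemma x C r : 0 <= r < 1 -> (forall k, Rabs x <= C * r^k) -> x = 0.
Proof. intros Hr H. destruct (Req_dec x 0) as [|Hx]; auto. exfalso.
  pose proof (Rabs_pos_lt x Hx). pose proof (H O). simpl in H1.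
  destruct (pow_lt_1_zero r ltac:(rewrite Rabs_right; lra) (Rabs x / C)) as [N HN].
  { apply Rdiv_lt_0_compat; lra. }
  pose proof (HN N (le_n N)). pose proof (H N).
  rewrite Rabs_right in H2 by (apply Rle_ge, pow_nonneg; lra).
  apply (Rmult_lt_compat_l C) in H2; [|lra].
  replace (C * (Rabs x / C)) with (Rabs x) in H2 by (field; lra). lra.
Qed.

Lemma chainA (G : Group) (a : G) (y : G -> R * R) d : 0 < d ->
  (forall g, Rabs (fst (y (gmul a g)) - fst (y g)) < d) ->
  (forall g, Rabs (snd (y (gmul a g)) - fst (y g) - snd (y g)) < d) ->
  forall p j, Rabs (fst (y (gmul (gpow a j) p)) - fst (y p)) <= INR j * d /\
    Rabs (snd (y (gmul (gpow a j) p)) - INR j * fst (y p) - snd (y p)) <= INR j * INR j * d.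
Proof. intros Hd H1 H2 p j. induction j as [|j IH].
  - simpl. rewrite gmul_1l. split; apply Rabs_le; lra.
  - simpl gpow. rewrite <- gmul_assoc. set (q := gmul (gpow a j) p) in *.
    destruct IH as [I1 I2]. apply abs_le_e in I1. apply abs_le_e in I2.
    pose proof (abs_lt_e _ _ (H1 q)). pose proof (abs_lt_e _ _ (H2 q)).
    rewrite S_INR. pose proof (pos_INR j).
    split; apply Rabs_le; nra.
Qed.

Lemma matA_inj u v : matA u = matA v -> u = v.
Proof. destruct u, v; unfold matA; simpl; intro H; injection H; intros.
  f_equal; lra. Qed.

Lemma matB_inj n lam u v : 0 < INR n -> 0 < lam -> matB n lam u = matB n lam v -> u = v.
Proof. intros Hn Hl. destruct u, v; unfold matB; simpl; intro H; injection H; intros.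
  f_equal. apply (Rmult_eq_reg_l lam); lra.
  apply (Rmult_eq_reg_l (INR n * lam)); [lra|]. assert (0 < INR n * lam) by nra. lra.
Qed.

Lemma part2 (n : nat) (lam : R) (G : Group) (a b : G) (Phi : G -> R*R -> R*R) :
  (1 < n)%nat -> 1 < lam -> gmul b a = gmul (gpow a n) b -> (forall g, generated a b g) ->
  is_action G Phi -> (forall x, Phi a x = matA x) -> (forall x, Phi b x = matB n lam x) ->
  INR n < lam -> shadowing a b Phi.
Proof.
  intros Hn Hl Hrel Hgen [Hc [H1 Hmul]] HPa HPb Hnl.
  intros eps Heps.
  assert (HN : 1 < INR n) by (apply lt_1_INR; auto).
  set (d := eps * (lam - 1) / 2).
  assert (Hd : 0 < d) by (unfold d; apply Rdiv_lt_0_compat; [apply Rmult_lt_0_compat|]; lra).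
  exists d. split; [exact Hd|]. intros y Hy.
  assert (HA1 : forall g, Rabs (fst (y (gmul a g)) - fst (y g)) < d).
  { intros g. pose proof (Hy a g (or_introl eq_refl)) as H. rewrite HPa in H.
    apply dist2_fst in H. exact H. }
  assert (HA2 : forall g, Rabs (snd (y (gmul a g)) - fst (y g) - snd (y g)) < d).
  { intros g. pose proof (Hy a g (or_introl eq_refl)) as H. rewrite HPa in H.
    apply dist2_snd in H. unfold matA in H; simpl in H.
    replace (snd (y (gmul a g)) - fst (y g) - snd (y g)) with
      (snd (y (gmul a g)) - (fst (y g) + snd (y g))) by ring. exact H. }
  assert (HB1 : forall g, Rabs (fst (y (gmul b g)) - lam * fst (y g)) < d).
  { intros g. pose proof (Hy b g (or_intror (or_introl eq_refl))) as H. rewrite HPb in H.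
    apply dist2_fst in H. exact H. }
  assert (HB2 : forall g, Rabs (snd (y (gmul b g)) - INR n * lam * snd (y g)) < d).
  { intros g. pose proof (Hy b g (or_intror (or_introl eq_refl))) as H. rewrite HPb in H.
    apply dist2_snd in H. exact H. }
  set (r := / lam). set (s := / (INR n * lam)). set (rho := INR n / lam).
  assert (Hr0 : 0 < r) by (unfold r; apply Rinv_0_lt_compat; lra).
  assert (Hlr : lam * r = 1) by (unfold r; field; lra).
  assert (Hr1 : r < 1) by nra.
  assert (Hs0 : 0 < s) by (unfold s; apply Rinv_0_lt_compat; nra).
  assert (Hsr : s <= r) by (unfold s, r; apply Rinv_le_contravar; nra).
  assert (Hnls : INR n * lam * s = 1) by (unfold s; field; nra).
  assert (Hrho : rho = INR n * r) by (unfold rho, r; field; lra).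
  assert (Hrho1 : r <= rho < 1) by (split; [rewrite Hrho; nra| unfold rho; apply (Rmult_lt_reg_r lam); [lra|]; unfold Rdiv; rewrite Rmult_assoc, Rinv_l; lra]).
  assert (Hrk : forall k, r ^ k <= rho ^ k) by (intros; apply pow_incr; lra).
  assert (Hrhok : forall k, rho ^ k = INR n ^ k * r ^ k) by (intros; rewrite Hrho, Rpow_mult_distr; reflexivity).
  assert (Hsk : forall k, INR n ^ k * s ^ k = r ^ k).
  { intros k. rewrite <- Rpow_mult_distr. f_equal. unfold s, r. field. split; lra. }
  pose (z1 := fun g k => fst (y (gmul (gpow b k) g)) * r ^ k).
  pose (z2 := fun g k => snd (y (gmul (gpow b k) g)) * s ^ k).
  assert (S1 : forall g k, Rabs (z1 g (S k) - z1 g k) <= (d*r) * r^k).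
  { intros g k. unfold z1. simpl gpow. simpl pow. rewrite <- gmul_assoc. set (p := gmul (gpow b k) g).
    replace (fst (y (gmul b p)) * (r * r ^ k) - fst (y p) * r ^ k) with
      ((fst (y (gmul b p)) - lam * fst (y p)) * r * r^k) by (unfold r; field; lra).
    pose proof (pow_nonneg r k ltac:(lra)).
    rewrite !Rabs_mult, (Rabs_pos_eq r), (Rabs_pos_eq (r^k)) by lra.
    pose proof (HB1 p). apply Rmult_le_compat_r; [lra|]. apply Rmult_le_compat_r; lra. }
  assert (S2 : forall g k, Rabs (z2 g (S k) - z2 g k) <= (d*r) * r^k).
  { intros g k. unfold z2. simpl gpow. simpl pow. rewrite <- gmul_assoc. set (p := gmul (gpow b k) g).
    replace (snd (y (gmul b p)) * (s * s ^ k) - snd (y p) * s ^ k) with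
      ((snd (y (gmul b p)) - INR n * lam * snd (y p)) * s * s^k) by (unfold s; field; nra).
    pose proof (pow_nonneg s k ltac:(lra)). pose proof (pow_incr s r k ltac:(lra)).
    rewrite !Rabs_mult, (Rabs_pos_eq s), (Rabs_pos_eq (s^k)) by lra.
    pose proof (HB2 p). pose proof (Rabs_pos (snd (y (gmul b p)) - INR n * lam * snd (y p))).
    apply Rmult_le_compat; try nra. }
  set (K := d * r / (1 - r)).
  assert (HK : 0 <= K) by (unfold K; apply Rmult_le_pos; [nra|left; apply Rinv_0_lt_compat; lra]).
  assert (W1 : forall g, {l | forall k, Rabs (l - z1 g k) <= K * r^k}).
  { intros g. destruct (conv_seq (z1 g) (d*r) r ltac:(nra) ltac:(lra) (S1 g)) as [l Hlim].
    exists l. intros k. specialize (Hlim k). unfold K.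
    replace (d * r / (1 - r) * r ^ k) with (d * r * r ^ k / (1 - r)) by (field; lra). exact Hlim. }
  assert (W2 : forall g, {l | forall k, Rabs (l - z2 g k) <= K * r^k}).
  { intros g. destruct (conv_seq (z2 g) (d*r) r ltac:(nra) ltac:(lra) (S2 g)) as [l Hlim].
    exists l. intros k. specialize (Hlim k). unfold K.
    replace (d * r / (1 - r) * r ^ k) with (d * r * r ^ k / (1 - r)) by (field; lra). exact Hlim. }
  pose (w1 := fun g => proj1_sig (W1 g)).
  pose (w2 := fun g => proj1_sig (W2 g)).
  assert (Hw1 : forall g k, Rabs (w1 g - z1 g k) <= K * r^k) by (intros g; exact (proj2_sig (W1 g))).
  assert (Hw2 : forall g k, Rabs (w2 g - z2 g k) <= K * r^k) by (intros g; exact (proj2_sig (W2 g))).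
  clearbody w1 w2.
  assert (Hbb : forall g k, gmul (gpow b k) (gmul b g) = gmul (gpow b (S k)) g).
  { intros. rewrite gmul_assoc, gpow_comm. reflexivity. }
  assert (EqB1 : forall g, w1 (gmul b g) = lam * w1 g).
  { intro g. apply Rminus_diag_uniq. apply (zero_lemma _ (2*K) rho); [lra|]. intro k.
    pose proof (abs_le_e _ _ (Hw1 (gmul b g) k)) as E1. pose proof (abs_le_e _ _ (Hw1 g (S k))) as E2.
    assert (Z : z1 (gmul b g) k = lam * z1 g (S k)).
    { unfold z1. rewrite Hbb. simpl pow. unfold r. field. lra. }
    rewrite Z in E1. simpl pow in E2.
    assert (lam * (K * (r * r ^ k)) = K * r ^ k) by (replace (lam * (K * (r * r ^ k))) with ((lam*r) * (K * r^k)) by ring; rewrite Hlr; ring).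
    pose proof (Hrk k). pose proof (pow_nonneg r k ltac:(lra)).
    apply Rabs_le. nra. }
  assert (EqB2 : forall g, w2 (gmul b g) = INR n * lam * w2 g).
  { intro g. apply Rminus_diag_uniq. apply (zero_lemma _ ((1 + INR n)*K) rho); [lra|]. intro k.
    pose proof (abs_le_e _ _ (Hw2 (gmul b g) k)) as E1. pose proof (abs_le_e _ _ (Hw2 g (S k))) as E2.
    assert (Z : z2 (gmul b g) k = INR n * lam * z2 g (S k)).
    { unfold z2. rewrite Hbb. simpl pow. unfold s. field. nra. }
    rewrite Z in E1. simpl pow in E2.
    assert (INR n * lam * (K * (r * r ^ k)) = INR n * (K * r ^ k)) by (replace (INR n * lam * (K * (r * r ^ k))) with (INR n * (lam*r) * (K * r^k)) by ring; rewrite Hlr; ring).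
    pose proof (Hrk k). pose proof (pow_nonneg r k ltac:(lra)).
    assert (0 < INR n * lam) by nra.
    assert (E2' : -(INR n*(K*r^k)) <= INR n*lam*(w2 g - z2 g (S k)) <= INR n*(K*r^k)).
    { rewrite <- H. split; nra. }
    assert ((1 + INR n) * K * r^k <= (1 + INR n) * K * rho^k).
    { apply Rmult_le_compat_l; [apply Rmult_le_pos; lra|lra]. }
    apply Rabs_le. split; nra. }
  assert (Hab : forall g k, gmul (gpow b k) (gmul a g) = gmul (gpow a (n^k)) (gmul (gpow b k) g)).
  { intros. rewrite gmul_assoc, (bs_rel2 G n a b Hrel k), <- gmul_assoc. reflexivity. }
  pose proof (chainA G a y d Hd HA1 HA2) as CH.
  assert (EqA1 : forall g, w1 (gmul a g) = w1 g).
  { intro g. apply Rminus_diag_uniq. apply (zero_lemma _ (2*K + d) rho); [lra|]. intro k.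
    pose proof (abs_le_e _ _ (Hw1 (gmul a g) k)) as E1. pose proof (abs_le_e _ _ (Hw1 g k)) as E2.
    unfold z1 in E1, E2. rewrite Hab in E1.
    set (p := gmul (gpow b k) g) in *.
    destruct (CH p (n^k)%nat) as [C1 _]. rewrite pow_INR in C1.
    apply abs_le_e in C1.
    pose proof (Hrk k). pose proof (pow_nonneg r k ltac:(lra)). pose proof (Hrhok k).
    assert (Hm : (fst (y (gmul (gpow a (n ^ k)) p)) - fst (y p)) * r ^ k <= d * rho ^ k /\
                 - (d * rho^k) <= (fst (y (gmul (gpow a (n ^ k)) p)) - fst (y p)) * r ^ k).
    { rewrite H2. split; nra. }
    apply Rabs_le. nra. }
  assert (EqA2 : forall g, w2 (gmul a g) = w1 g + w2 g).
  { intro g. apply Rminus_diag_uniq. apply (zero_lemma _ (3*K + d) rho); [lra|]. intro k.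
    pose proof (abs_le_e _ _ (Hw2 (gmul a g) k)) as E1. pose proof (abs_le_e _ _ (Hw1 g k)) as E2.
    pose proof (abs_le_e _ _ (Hw2 g k)) as E3.
    unfold z1, z2 in E1, E2, E3. rewrite Hab in E1.
    set (p := gmul (gpow b k) g) in *.
    destruct (CH p (n^k)%nat) as [_ C2]. rewrite pow_INR in C2.
    apply abs_le_e in C2.
    pose proof (Hrk k). pose proof (pow_nonneg r k ltac:(lra)). pose proof (Hrhok k).
    pose proof (pow_nonneg s k ltac:(lra)). pose proof (Hsk k).
    set (X := snd (y (gmul (gpow a (n ^ k)) p)) - INR n ^ k * fst (y p) - snd (y p)) in *.
    assert (Heq : snd (y (gmul (gpow a (n ^ k)) p)) * s ^ k - fst (y p) * r ^ k - snd (y p) * s ^ k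
                  = X * s ^ k) by (unfold X; rewrite <- H4; ring).
    assert (Hm : X * s ^ k <= d * rho ^ k /\ - (d * rho^k) <= X * s ^ k).
    { assert (INR n ^ k * INR n ^ k * d * s ^ k = d * rho ^ k) by (rewrite H2, <- H4; ring).
      split; nra. }
    apply Rabs_le. nra. }
  pose (W := fun g => (w1 g, w2 g)).
  assert (HWa : forall g, W (gmul a g) = matA (W g)).
  { intros g. unfold W, matA. simpl. rewrite EqA1, EqA2. reflexivity. }
  assert (HWb : forall g, W (gmul b g) = matB n lam (W g)).
  { intros g. unfold W, matB. simpl. rewrite EqB1, EqB2. reflexivity. }
  assert (Main : forall g, generated a b g -> W g = Phi g (W gone)).
  { intros g Hg. induction Hg as [|s0 g Hs Hg IH].
    - rewrite H1. reflexivity.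
    - rewrite Hmul, <- IH. destruct Hs as [->|[->|[->| ->]]].
      + rewrite HPa. apply HWa.
      + rewrite HPb. apply HWb.
      + apply matA_inj. rewrite <- HWa, <- HPa, <- Hmul, gmul_assoc, !gmul_Vr, gmul_1l, H1.
        reflexivity.
      + apply (matB_inj n lam); [lra|lra|].
        rewrite <- HWb, <- HPb, <- Hmul, gmul_assoc, !gmul_Vr, gmul_1l, H1.
        reflexivity. }
  exists (W gone). intros g. rewrite <- (Main g (Hgen g)).
  assert (HKe : K = eps / 2).
  { unfold K, d, r. replace (1 - / lam) with ((lam - 1) / lam) by (field; lra). field. split; lra. }
  apply (dist2_lt _ _ (eps/2) (eps/2)); [| | nra | lra].
  - pose proof (Hw1 g O). unfold z1 in H. simpl in H. rewrite gmul_1l, Rmult_1_r in H.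
    unfold W; simpl. rewrite Rabs_minus_sym. lra.
  - pose proof (Hw2 g O). unfold z2 in H. simpl in H. rewrite gmul_1l, Rmult_1_r in H.
    unfold W; simpl. rewrite Rabs_minus_sym. lra.
Qed.

Definition phi (s : R) : R :=
  if Rle_dec s 0 then 0 else if Rle_dec s 1 then s else 1.
Definition chi (s : R) : R :=
  if Rle_dec s 0 then 0 else if Rle_dec s 1 then s * s / 2 else s - 1 / 2.

Lemma phi_range s : 0 <= phi s <= 1.
Proof. unfold phi; repeat destruct Rle_dec; lra. Qed.

Lemma phi_lip s t : Rabs (phi t - phi s) <= Rabs (t - s).
Proof. unfold phi; repeat destruct Rle_dec; unfold Rabs; repeat destruct Rcase_abs; lra. Qed.

Lemma chi_lip s t : Rabs (chi t - chi s) <= Rabs (t - s).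
Proof. unfold chi; repeat destruct Rle_dec; unfold Rabs; repeat destruct Rcase_abs; nra. Qed.

Lemma chi_taylor s t : Rabs (chi t - chi s - (t - s) * phi s) <= (t - s) * (t - s).
Proof. pose proof (Rle_0_sqr (t-s)); pose proof (Rle_0_sqr (t-1)); pose proof (Rle_0_sqr (s-1)); pose proof (Rle_0_sqr t); pose proof (Rle_0_sqr s); unfold Rsqr in *.
  unfold chi, phi; repeat destruct Rle_dec; apply Rabs_le; split; nra. Qed.

Lemma key L Q sg sig : 0 < L -> 0 < Q -> (L <= Q \/ L <= 1) -> (sig = 1 \/ sig = -1) ->
  Rabs (L * (phi (sg + sig / Q) - phi sg)) <= 1 /\
  Rabs (Q * L * (chi (sg + sig / Q) - chi sg) - sig * L * phi sg) <= 2.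
Proof. intros HL HQ Hc Hs.
  set (t := sig / Q).
  assert (HQt : Q * t = sig) by (unfold t; field; lra).
  assert (Hiq : 0 < / Q) by (apply Rinv_0_lt_compat; lra).
  assert (Hat : Rabs t = / Q).
  { unfold t. destruct Hs as [->| ->]; unfold Rdiv; [rewrite Rmult_1_l|];
    [apply Rabs_pos_eq; lra| rewrite Rabs_left; [field; lra| nra]]. }
  assert (Htt : t * t = / Q * / Q).
  { rewrite <- Hat. rewrite <- Rabs_mult. rewrite Rabs_pos_eq; [reflexivity|nra]. }
  pose proof (phi_lip sg (sg + t)) as P1. replace (sg + t - sg) with t in P1 by ring.
  pose proof (chi_lip sg (sg + t)) as P2. replace (sg + t - sg) with t in P2 by ring.
  pose proof (chi_taylor sg (sg + t)) as P3. replace (sg + t - sg) with t in P3 by ring.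
  rewrite Hat in P1, P2. rewrite Htt in P3.
  apply abs_le_e in P1. apply abs_le_e in P2. apply abs_le_e in P3.
  pose proof (phi_range sg). pose proof (phi_range (sg + t)).
  assert (HLQ : L * / Q * Q = L) by (field; lra).
  destruct Hc as [Hc|Hc].
  - assert (L * / Q <= 1).
    { apply (Rmult_le_reg_r Q); [lra|]. rewrite HLQ. lra. }
    split; apply Rabs_le.
    + split; nra.
    + replace (Q * L * (chi (sg + t) - chi sg) - sig * L * phi sg) with
        (Q * L * (chi (sg + t) - chi sg - t * phi sg)) by (rewrite <- HQt; ring).
      assert (Q * L * (/ Q * / Q) = L * / Q) by (field; lra).
      assert (0 < Q * L) by nra.
      split; nra.
  - split; apply Rabs_le.
    + split; nra.
    + assert (Q * L * / Q = L) by (field; lra).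
      assert (0 < Q * L) by nra.
      assert (-1 <= sig * L * phi sg <= 1) by (destruct Hs as [-> | ->]; split; nra).
      split; nra.
Qed.

Definition Hmul (N : R) (x y : Z * R) : Z * R :=
  ((fst x + fst y)%Z, snd x + powerRZ N (fst x) * snd y).
Definition Hinv (N : R) (x : Z * R) : Z * R :=
  ((- fst x)%Z, - (powerRZ N (- fst x) * snd x)).

Lemma Hmul_assoc N (HN : N <> 0) x y z : Hmul N x (Hmul N y z) = Hmul N (Hmul N x y) z.
Proof. destruct x as [x1 x2], y as [y1 y2], z as [z1 z2]; unfold Hmul; simpl.
  f_equal; [lia|]. rewrite powerRZ_add by auto. ring. Qed.
Lemma Hmul_1l N x : Hmul N (0%Z, 0) x = x.
Proof. destruct x; unfold Hmul; simpl. f_equal; ring. Qed.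
Lemma Hmul_1r N x : Hmul N x (0%Z, 0) = x.
Proof. destruct x; unfold Hmul; simpl. f_equal; [lia|ring]. Qed.
Lemma Hmul_Vl N x : Hmul N (Hinv N x) x = (0%Z, 0).
Proof. destruct x; unfold Hmul, Hinv; simpl. f_equal; [lia|ring]. Qed.
Lemma Hmul_Vr N (HN : N <> 0) x : Hmul N x (Hinv N x) = (0%Z, 0).
Proof. destruct x as [h t]; unfold Hmul, Hinv; simpl. f_equal; [lia|].
  rewrite powerRZ_neg'. field. apply powerRZ_NOR; auto. Qed.

Definition Hgrp (N : R) (HN : N <> 0) : Group :=
  {| carrier := Z * R; gmul := Hmul N; ginv := Hinv N; gone := (0%Z, 0);
     gmul_assoc := Hmul_assoc N HN; gmul_1l := Hmul_1l N; gmul_1r := Hmul_1r N;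
     gmul_Vl := Hmul_Vl N; gmul_Vr := Hmul_Vr N HN |}.

Lemma PZ1 x h : x <> 0 -> powerRZ x (1 + h) = x * powerRZ x h.
Proof. intros. rewrite powerRZ_add by auto. simpl. ring. Qed.
Lemma PZm1 x h : x <> 0 -> powerRZ x (-1 + h) = / x * powerRZ x h.
Proof. intros. rewrite powerRZ_add by auto. simpl. field. auto. Qed.

Lemma LQ lam N h : 1 < lam -> lam <= N -> powerRZ lam h <= powerRZ N h \/ powerRZ lam h <= 1.
Proof. intros. destruct h as [|p|p]; simpl.
  - left; lra.
  - left; apply pow_incr; lra.
  - right. pose proof (pow_R1_Rle lam (Pos.to_nat p) ltac:(lra)).
    rewrite <- Rinv_1. apply Rinv_le_contravar; lra.
Qed.

Definition Yf (lam N kap : R) (p : Z * R) : R * R :=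
  (kap * (powerRZ lam (fst p) * phi (snd p * powerRZ N (- fst p))),
   kap * (powerRZ (N * lam) (fst p) * chi (snd p * powerRZ N (- fst p)))).

Lemma step_gen kap L Q sg sig : 0 < kap -> 0 < L -> 0 < Q -> (L <= Q \/ L <= 1) ->
  (sig = 1 \/ sig = -1) ->
  dist2 (kap * (L * phi (sg + sig / Q)), kap * (Q * L * chi (sg + sig / Q)))
        (kap * (L * phi sg), sig * (kap * (L * phi sg)) + kap * (Q * L * chi sg)) < 4 * kap.
Proof. intros Hk HL HQ Hc Hs. destruct (key L Q sg sig HL HQ Hc Hs) as [K1 K2].
  apply (dist2_lt _ _ (kap * 1) (kap * 2)); simpl; [| | nra | lra].
  - replace (kap * (L * phi (sg + sig / Q)) - kap * (L * phi sg)) with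
      (kap * (L * (phi (sg + sig / Q) - phi sg))) by ring.
    rewrite Rabs_mult, Rabs_pos_eq by lra. apply Rmult_le_compat_l; lra.
  - replace (kap * (Q * L * chi (sg + sig / Q)) - (sig * (kap * (L * phi sg)) + kap * (Q * L * chi sg)))
      with (kap * (Q * L * (chi (sg + sig / Q) - chi sg) - sig * L * phi sg)) by ring.
    rewrite Rabs_mult, (Rabs_pos_eq kap) by lra. apply Rmult_le_compat_l; lra.
Qed.

Lemma stepA lam N kap h t : 1 < lam -> lam <= N -> 0 < kap ->
  dist2 (Yf lam N kap (Hmul N (0%Z, 1) (h, t))) (matA (Yf lam N kap (h, t))) < 4 * kap.
Proof. intros Hl HlN Hk. unfold Yf, Hmul, matA. simpl.
  rewrite powerRZ_mult, powerRZ_neg'.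
  set (L := powerRZ lam h). set (Q := powerRZ N h).
  assert (0 < L) by (apply powerRZ_lt; lra). assert (0 < Q) by (apply powerRZ_lt; lra).
  replace ((1 + 1 * t) * / Q) with (t * / Q + 1 / Q) by (field; lra).
  pose proof (step_gen kap L Q (t * / Q) 1 Hk H H0 (LQ lam N h Hl HlN) (or_introl eq_refl)) as S.
  rewrite Rmult_1_l in S. exact S.
Qed.

Lemma stepAi lam N kap h t : 1 < lam -> lam <= N -> 0 < kap ->
  dist2 (Yf lam N kap (Hmul N (Hinv N (0%Z, 1)) (h, t)))
    (let v := Yf lam N kap (h, t) in (fst v, snd v - fst v)) < 4 * kap.
Proof. intros Hl HlN Hk. unfold Yf, Hmul, Hinv. simpl.
  rewrite powerRZ_mult, powerRZ_neg'.
  set (L := powerRZ lam h). set (Q := powerRZ N h).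
  assert (0 < L) by (apply powerRZ_lt; lra). assert (0 < Q) by (apply powerRZ_lt; lra).
  replace ((- (1 * 1) + 1 * t) * / Q) with (t * / Q + -1 / Q) by (field; lra).
  pose proof (step_gen kap L Q (t * / Q) (-1) Hk H H0 (LQ lam N h Hl HlN) (or_intror eq_refl)) as S.
  replace (kap * (Q * L * chi (t * / Q)) - kap * (L * phi (t * / Q))) with
    (-1 * (kap * (L * phi (t * / Q))) + kap * (Q * L * chi (t * / Q))) by ring.
  exact S.
Qed.

Lemma stepB lam N kap h t : 1 < lam -> lam <= N -> 0 < kap -> 0 < N ->
  Yf lam N kap (Hmul N (1%Z, 0) (h, t)) =
    (lam * fst (Yf lam N kap (h, t)), N * lam * snd (Yf lam N kap (h, t))).
Proof. intros Hl HlN Hk HN. unfold Yf, Hmul. cbn [fst snd].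
  rewrite Z.opp_add_distr. rewrite PZm1, !PZ1 by nra.
  replace (powerRZ N 1) with N by (simpl; ring).
  replace ((0 + N * t) * (/ N * powerRZ N (- h))) with (t * powerRZ N (- h)) by (field; lra).
  f_equal; ring.
Qed.

Lemma stepBi lam N kap h t : 1 < lam -> lam <= N -> 0 < kap -> 0 < N ->
  Yf lam N kap (Hmul N (Hinv N (1%Z, 0)) (h, t)) =
    (fst (Yf lam N kap (h, t)) / lam, snd (Yf lam N kap (h, t)) / (N * lam)).
Proof. intros Hl HlN Hk HN. unfold Yf, Hmul, Hinv. cbn [fst snd].
  rewrite Z.opp_add_distr. change (- -1)%Z with 1%Z. change (- 1)%Z with (-1)%Z.
  rewrite PZ1, !PZm1 by nra.
  replace (powerRZ N (- (1))%Z) with (/ N) by (simpl; field; lra).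
  replace ((- (/ N * 0) + / N * t) * (N * powerRZ N (- h))) with (t * powerRZ N (- h)) by (field; lra).
  f_equal; field; nra.
Qed.

Lemma gpowH_a N HN k : @gpow (Hgrp N HN) (0%Z, 1) k = (0%Z, INR k).
Proof. induction k as [|k IH]; [reflexivity|].
  cbn [gpow]. rewrite IH. cbn [gmul Hgrp]. unfold Hmul. cbn [fst snd].
  rewrite S_INR. f_equal. simpl. ring. Qed.

Lemma gpowH_b N HN k : @gpow (Hgrp N HN) (1%Z, 0) k = (Z.of_nat k, 0).
Proof. induction k as [|k IH]; [reflexivity|].
  cbn [gpow]. rewrite IH. cbn [gmul Hgrp]. unfold Hmul. cbn [fst snd].
  f_equal; [lia|ring]. Qed.

Lemma hom_one (G H : Group) (f : G -> H) : is_hom f -> f gone = gone.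
Proof. intros Hf. apply idem_one. rewrite <- Hf, gmul_1l. reflexivity. Qed.

Lemma hom_inv (G H : Group) (f : G -> H) : is_hom f -> forall x, f (ginv x) = ginv (f x).
Proof. intros Hf x. apply inv_unique. rewrite <- Hf, gmul_Vl. apply hom_one; auto. Qed.

Lemma hom_pow (G H : Group) (f : G -> H) : is_hom f -> forall x k, f (gpow x k) = gpow (f x) k.
Proof. intros Hf x k. induction k; simpl. apply hom_one; auto. rewrite Hf, IHk. reflexivity. Qed.

Lemma part1 (n : nat) (lam : R) (G : Group) (a b : G) (Phi : G -> R*R -> R*R) :
  (1 < n)%nat -> 1 < lam -> is_BS1n G n a b -> is_action G Phi ->
  (forall x, Phi a x = matA x) -> (forall x, Phi b x = matB n lam x) ->
  lam <= INR n -> ~ shadowing a b Phi.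
Proof.
  intros Hn Hl [Hgen [Hrel Huniv]] [Hc [H1 HPm]] HPa HPb HlN Hsh.
  assert (HN : 1 < INR n) by (apply lt_1_INR; auto).
  assert (HN0 : INR n <> 0) by lra.
  destruct (Huniv (Hgrp (INR n) HN0) (0%Z, 1) (1%Z, 0)) as [f [Hf [Hfa Hfb]]].
  { rewrite gpowH_a. cbn [gmul Hgrp]. unfold Hmul. cbn [fst snd].
    f_equal. simpl. ring. }
  assert (PAi : forall v, Phi (ginv a) v = (fst v, snd v - fst v)).
  { intros v. pose proof (HPm a (ginv a) v) as E. rewrite gmul_Vr, H1, HPa in E.
    destruct (Phi (ginv a) v) as [w1 w2]. rewrite E. unfold matA. simpl. f_equal. ring. }
  assert (PBi : forall v, Phi (ginv b) v = (fst v / lam, snd v / (INR n * lam))).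
  { intros v. pose proof (HPm b (ginv b) v) as E. rewrite gmul_Vr, H1, HPb in E.
    destruct (Phi (ginv b) v) as [w1 w2]. rewrite E. unfold matB. simpl. f_equal; field; nra. }
  destruct (Hsh 1 Rlt_0_1) as [d [Hd Hs]].
  set (kap := d / 4).
  assert (Hk : 0 < kap) by (unfold kap; lra).
  pose (y := fun g => Yf lam (INR n) kap (f g)).
  assert (Hpt : pseudotrajectory a b Phi d y).
  { intros s g Hs'. unfold y. rewrite Hf.
    replace d with (4 * kap) by (unfold kap; field).
    destruct (f g) as [h t] eqn:Efg.
    destruct Hs' as [->|[->|[->| ->]]].
    - rewrite Hfa, HPa. apply stepA; lra.
    - rewrite Hfb, HPb. cbn [gmul Hgrp]. rewrite (stepB lam (INR n) kap h t) by lra.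
      apply (dist2_lt _ _ 0 0); unfold matB; simpl; try nra;
        unfold Rminus; rewrite Rplus_opp_r, Rabs_R0; lra.
    - rewrite (hom_inv _ _ f Hf), Hfa, PAi. apply stepAi; lra.
    - rewrite (hom_inv _ _ f Hf), Hfb, PBi. cbn [gmul ginv Hgrp]. rewrite (stepBi lam (INR n) kap h t) by lra.
      apply (dist2_lt _ _ 0 0); simpl; try nra;
        unfold Rminus; rewrite Rplus_opp_r, Rabs_R0; lra. }
  destruct (Hs y Hpt) as [x Hx].
  assert (PB : forall k v, fst (Phi (gpow b k) v) = lam ^ k * fst v).
  { intros k v. induction k; simpl. rewrite H1. ring. rewrite HPm, HPb. simpl. rewrite IHk. ring. }
  assert (PA : forall k v, fst (Phi (gpow a k) v) = fst v).
  { intros k v. induction k; simpl. rewrite H1. ring. rewrite HPm, HPa. simpl. exact IHk. }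
  assert (Bnd : forall k, kap * lam ^ k < 2).
  { intros k.
    pose proof (dist2_fst _ _ _ (Hx (gpow b k))) as E1.
    pose proof (dist2_fst _ _ _ (Hx (gmul (gpow a (n^k)) (gpow b k)))) as E2.
    rewrite PB in E1. rewrite HPm, PA, PB in E2.
    unfold y, Yf in E1, E2. rewrite Hf in E2. rewrite (hom_pow _ _ f Hf b k) in E1, E2. rewrite (hom_pow _ _ f Hf a) in E2.
    rewrite Hfa, Hfb, gpowH_a, gpowH_b in *. cbn [gmul Hgrp] in E2. unfold Hmul in E2.
    cbn [fst snd] in E1, E2. change (0 + Z.of_nat k)%Z with (Z.of_nat k) in E2.
    rewrite <- pow_powerRZ in E1, E2.
    rewrite Rmult_0_l in E1. unfold phi at 1 in E1.
    destruct (Rle_dec 0 0) as [_|C]; [|lra].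
    replace ((INR (n ^ k) + powerRZ (INR n) 0 * 0) * powerRZ (INR n) (- Z.of_nat k)) with 1 in E2.
    2:{ rewrite powerRZ_neg', <- pow_powerRZ, pow_INR. simpl powerRZ. field.
        apply pow_nonzero. lra. }
    unfold phi at 1 in E2. destruct (Rle_dec 1 0); [lra|]. destruct (Rle_dec 1 1); [|lra].
    apply abs_lt_e in E1. apply abs_lt_e in E2. lra. }
  destruct (pow_lt_1_zero (/ lam) ltac:(rewrite Rabs_pos_eq; [rewrite <- Rinv_1; apply Rinv_lt_contravar; lra | left; apply Rinv_0_lt_compat; lra]) (kap / 2)) as [M HM].
  { lra. }
  specialize (HM M (le_n M)). specialize (Bnd M).
  rewrite pow_inv, Rabs_pos_eq in HM by (left; apply Rinv_0_lt_compat, pow_lt; lra).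
  pose proof (pow_lt lam M ltac:(lra)).
  apply (Rmult_lt_compat_r (lam ^ M)) in HM; [|lra].
  rewrite Rinv_l in HM by lra. nra.
Qed.

Theorem theorem2 (n : nat) (lam : R) (G : Group) (a b : G)
  (Phi : G -> R * R -> R * R) :
  (1 < n)%nat -> 1 < lam ->
  is_BS1n G n a b ->
  is_action G Phi ->
  (forall x, Phi a x = matA x) ->
  (forall x, Phi b x = matB n lam x) ->
  (lam <= INR n -> ~ shadowing a b Phi) /\
  (INR n < lam -> shadowing a b Phi).
Proof.
  intros Hn Hl HBS Hact HPa HPb. split.
  - intros HlN. exact (part1 n lam G a b Phi Hn Hl HBS Hact HPa HPb HlN).
  - intros HnL. destruct HBS as [Hgen [Hrel _]].
    exact (part2 n lam G a b Phi Hn Hl Hrel Hgen Hact HPa HPb HnL).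
Qed.
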